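(* Let $T=(V,E)$ be a temporal bipartite graph, let $\tau>0$, let $i\in\{1,\dots,6\}$ and let $p\in(0,1)$. Let $\widehat{C}_i$ be the estimator produced by either \texttt{TBC-E} or \texttt{TBC-N} (both with sampling probability $p$), as described in the context. Then $\mathbb{E}[\widehat{C}_i]=C_i$ and $\operatorname{Var}[\widehat{C}_i]\le \frac{1-p}{p}\,C_i^2$.
   Context: A temporal bipartite graph $T=(V,E)$ has node set $V=U\cup L$ with $U\cap L=\emptyset$ and a finite (multi)set $E\subseteq U\times L\times\mathbb{R}^+$ of temporal edges $(u,l,t)$ (several edges may join the same pair $u,l$ at different times); $m=|E|$. A temporal butterfly $B_i$ ($i=1,\dots,6$) is the butterfly on nodes $u'_1,u'_2\in U$-side and $l'_1,l'_2\in L$-side with edges $(u'_1,l'_1),(u'_2,l'_1),(u'_1,l'_2),(u'_2,l'_2)$ together with an ordering $\sigma_i$ of these four edges; $\sigma_1,\dots,\sigma_6$ are the six orderings in which $(u'_1,l'_1)$ comes first (a fixed enumeration of the permutations of the remaining three edges). Given $\tau>0$, a set $S$ of four temporal edges $\{(u_x,l_x,t_1),(u_y,l_x,t_2),(u_x,l_y,t_3),(u_y,l_y,t_4)\}$ of $T$ with $u_x\ne u_y\in U$, $l_x\ne l_y\in L$ is a $\tau$-instance of $B_i$ if, under the map $u_x\mapsto u'_1,u_y\mapsto u'_2,l_x\mapsto l'_1,l_y\mapsto l'_2$, the order of the four edges by timestamp matches $\sigma_i$ (so $(u_x,l_x,t_1)$ has the smallest timestamp), and $\max_{j\in\{2,3,4\}}t_j-t_1\le\tau$.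 $C_i$ denotes the number of $\tau$-instances of $B_i$ in $T$, and for an edge $e\in E$, $C_i(e)$ denotes the number of $\tau$-instances of $B_i$ whose first (smallest-timestamp) edge is $e$, so that $\sum_{e\in E}C_i(e)=C_i$. Algorithm \texttt{TBC-E}: each edge $e\in E$ is put into a sample $\widehat{E}$ independently with probability $p$, and the output is $\widehat{C}_i=\sum_{e\in\widehat{E}}C_i(e)/p$. Algorithm \texttt{TBC-N}: each node $u\in U$ is put into a sample $\widehat{U}$ independently with probability $p$ (the same construction may alternatively be applied to $L$), $\widehat{E}$ is the set of all edges incident to a node of $\widehat{U}$, and the output is $\widehat{C}_i=\sum_{e\in\widehat{E}}C_i(e)/p$. *)

(* Defs.v *)
From mathcomp Require Import all_boot all_order all_algebra.
Set Implicit Arguments. Unset Strict Implicit. Unset Printing Implicit Defensive.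
Import Order.TTheory GRing.Theory Num.Theory.
Local Open Scope ring_scope.

(* Positions of the four butterfly edges:
   0 = (u'1,l'1), 1 = (u'2,l'1), 2 = (u'1,l'2), 3 = (u'2,l'2).
   sigma i (i : 'I_6, standing for B_(i+1)) lists the positions in increasing
   time order; position 0 always comes first. *)
Definition sigma (i : 'I_6) : seq nat :=
  nth [::] [:: [:: 0; 1; 2; 3]%N; [:: 0; 1; 3; 2]%N; [:: 0; 2; 1; 3]%N;
               [:: 0; 2; 3; 1]%N; [:: 0; 3; 1; 2]%N; [:: 0; 3; 2; 1]%N] i.

Section TemporalButterflies.
Variables (R : realFieldType) (U L E : finType)
          (src : E -> U) (dst : E -> L) (time : E -> R) (tau : R).

(* (e1,e2,e3,e4) = ((u_x,l_x,t1),(u_y,l_x,t2),(u_x,l_y,t3),(u_y,l_y,t4)) is a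
   tau-instance of B_i. *)
Definition butterfly_tuple (i : 'I_6) (e1 e2 e3 e4 : E) : bool :=
  [&& src e1 == src e3, src e2 == src e4, src e1 != src e2,
      dst e1 == dst e2, dst e3 == dst e4, dst e1 != dst e3,
      sorted <%R [seq nth 0 [:: time e1; time e2; time e3; time e4] k
                 | k <- sigma i] &
      Num.max (time e2) (Num.max (time e3) (time e4)) - time e1 <= tau].

Definition is_instance (i : 'I_6) (S : {set E}) : bool :=
  [exists e1 : E, exists e2 : E, exists e3 : E, exists e4 : E,
     (S == [set e1; e2; e3; e4]) && butterfly_tuple i e1 e2 e3 e4].

Definition count_C (i : 'I_6) : nat := #|[set S : {set E} | is_instance i S]|.

Definition count_Ce (i : 'I_6) (e : E) : nat :=
  #|[set S : {set E} | [&& is_instance i S, e \in S &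
                           [forall f in S, time e <= time f]]]|.

Definition est_E (i : 'I_6) (p : R) (S : {set E}) : R :=
  (\sum_(e in S) (count_Ce i e)%:R) / p.

Definition est_NU (i : 'I_6) (p : R) (S : {set U}) : R :=
  (\sum_(e in [set e : E | src e \in S]) (count_Ce i e)%:R) / p.

Definition est_NL (i : 'I_6) (p : R) (S : {set L}) : R :=
  (\sum_(e in [set e : E | dst e \in S]) (count_Ce i e)%:R) / p.

End TemporalButterflies.

(* Expectation of f(S) where S contains each element of X independently
   with probability p. *)
Definition bexp (R : realFieldType) (X : finType) (p : R) (f : {set X} -> R) : R :=
  \sum_(S : {set X}) p ^+ #|S| * (1 - p) ^+ (#|X| - #|S|)%N * f S.

Definition bvar (R : realFieldType) (X : finType) (p : R) (f : {set X} -> R) : R :=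
  bexp p (fun S => (f S - bexp p f) ^+ 2).

(* Main.v *)
Require Import Defs.
From mathcomp Require Import all_boot all_order all_algebra.
From mathcomp Require Import lra ring.
Set Implicit Arguments. Unset Strict Implicit. Unset Printing Implicit Defensive.
Import Order.TTheory GRing.Theory Num.Theory.
Local Open Scope ring_scope.

Section Gen.
Variables (R : realFieldType) (X : finType) (p : R).

Lemma weightE (S : {set X}) :
  p ^+ #|S| * (1 - p) ^+ (#|X| - #|S|)%N = \prod_x (if x \in S then p else 1 - p).
Proof.
rewrite (bigID (fun x => x \in S)) /=.
rewrite (eq_bigr (fun _ => p)); last by move=> x ->.
rewrite [X in _ = _ * X](eq_bigr (fun _ => 1 - p)); last by move=> x /negbTE ->.
rewrite !prodr_const; congr (_ ^+ _ * _ ^+ _); 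
rewrite -(cardsC S) addKn; apply: eq_card => x; by rewrite !inE.
Qed.

Lemma sum_prod (h : X -> bool -> R) :
  \sum_(S : {set X}) \prod_x h x (x \in S) = \prod_x (h x true + h x false).
Proof.
under [RHS]eq_bigr => x _ do rewrite -(big_bool _ (h x)).
rewrite bigA_distr_bigA /=.
rewrite (reindex (fun f : {ffun X -> bool} => [set x | f x])) /=.
  by apply: eq_bigr => f _; apply: eq_bigr => x _; rewrite inE.
exists (fun S : {set X} => [ffun x => x \in S]) => [f _|S _].
  by apply/ffunP => x; rewrite ffunE inE.
by apply/setP => x; rewrite inE ffunE.
Qed.

Lemma eq_bexp (f g : {set X} -> R) : (forall S, f S = g S) -> bexp p f = bexp p g.
Proof. by move=> fg; apply: eq_bigr => S _; rewrite fg. Qed.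

Lemma bexpD (f g : {set X} -> R) : bexp p (fun S => f S + g S) = bexp p f + bexp p g.
Proof. by rewrite /bexp -big_split; apply: eq_bigr => S _; rewrite mulrDr. Qed.

Lemma bexpZ (c : R) (f : {set X} -> R) : bexp p (fun S => c * f S) = c * bexp p f.
Proof. by rewrite /bexp mulr_sumr; apply: eq_bigr => S _; rewrite mulrCA. Qed.

Lemma bexp_sum (I : finType) (c : I -> R) (g : I -> {set X} -> R) :
  bexp p (fun S => \sum_i c i * g i S) = \sum_i c i * bexp p (g i).
Proof.
rewrite /bexp; under eq_bigr => S _ do rewrite mulr_sumr.
rewrite exchange_big; apply: eq_bigr => i _; rewrite mulr_sumr.
by apply: eq_bigr => S _; rewrite mulrCA.
Qed.

Lemma bexp_lin4 a b c d (f g h : {set X} -> R) :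
  bexp p (fun S => a * f S + b * g S + c * h S + d) =
  a * bexp p f + b * bexp p g + c * bexp p h + d * bexp p (fun _ : {set X} => 1).
Proof.
rewrite /bexp !mulr_sumr -!big_split /=; apply: eq_bigr => S _; ring.
Qed.

Lemma bexp_sub (A : {set X}) :
  bexp p (fun S => \prod_(z in A) (z \in S)%:R) = p ^+ #|A|.
Proof.
rewrite /bexp.
under eq_bigr => S _ do rewrite weightE [X in _ * X]big_mkcond -big_split /=.
rewrite (sum_prod (fun x b => (if b then p else 1 - p) * (if x \in A then b%:R else 1))).
rewrite -prodr_const [RHS]big_mkcond /=.
apply: eq_bigr => x _.
by case: (x \in A) => /=; rewrite ?mulr1 ?mulr0 ?addr0 //; ring.
Qed.

Lemma bexp1 : bexp p (fun _ : {set X} => 1) = 1.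
Proof.
rewrite (eq_bexp (g:=fun S : {set X} => \prod_(z in set0) (z \in S)%:R)).
  by rewrite bexp_sub cards0.
by move=> S; rewrite big_set0.
Qed.

Lemma bexp_in x : bexp p (fun S : {set X} => (x \in S)%:R) = p.
Proof.
rewrite (eq_bexp (g:=fun S : {set X} => \prod_(z in [set x]) (z \in S)%:R)).
  by rewrite bexp_sub cards1.
by move=> S; rewrite big_set1.
Qed.

Lemma bexp_in2 x y : bexp p (fun S : {set X} => (x \in S)%:R * (y \in S)%:R) =
  if y == x then p else p ^+ 2.
Proof.
have [->|nyx] := eqVneq y x.
  rewrite (eq_bexp (g:=fun S : {set X} => (x \in S)%:R)) ?bexp_in //.
  by move=> S; case: (x \in S); rewrite ?mulr1 ?mulr0.
rewrite (eq_bexp (g:=fun S : {set X} => \prod_(z in [set x; y]) (z \in S)%:R)).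
  by rewrite bexp_sub cards2 eq_sym nyx.
move=> S; rewrite (bigD1 x) ?inE ?eqxx //= (bigD1 y) ?inE ?eqxx ?orbT ?nyx //=.
rewrite big1 ?mulr1 // => z; rewrite !inE.
by case: (z == x); case: (z == y).
Qed.

Lemma sq_le (w : X -> R) : (forall x, 0 <= w x) ->
  \sum_x w x ^+ 2 <= (\sum_x w x) ^+ 2.
Proof.
move=> w0; rewrite expr2 mulr_suml; apply: ler_sum => x _.
rewrite mulr_sumr (bigD1 x) //= expr2 lerDl; apply: sumr_ge0 => y _.
by apply: mulr_ge0.
Qed.

Lemma gen (w : X -> R) : 0 < p -> p < 1 -> (forall x, 0 <= w x) ->
  bexp p (fun S => (\sum_(x in S) w x) / p) = \sum_x w x /\
  bvar p (fun S => (\sum_(x in S) w x) / p) <= (1 - p) / p * (\sum_x w x) ^+ 2.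
Proof.
move=> p0 p1 w0.
have pn0 : p != 0 by rewrite gt_eqF.
have fE (S : {set X}) : (\sum_(x in S) w x) / p = \sum_x (w x / p) * (x \in S)%:R.
  rewrite mulr_suml big_mkcond /=; apply: eq_bigr => x _.
  by case: (x \in S); rewrite ?mulr1 ?mulr0 ?mul0r.
have Ef : bexp p (fun S => (\sum_(x in S) w x) / p) = \sum_x w x.
  rewrite (eq_bexp fE) bexp_sum; apply: eq_bigr => x _.
  by rewrite bexp_in mulrVK // unitfE.
split => //.
rewrite /bvar Ef.
have dE (S : {set X}) : ((\sum_(x in S) w x) / p - \sum_x w x) ^+ 2 =
    \sum_x w x * \sum_y w y * (((x \in S)%:R * (y \in S)%:R) / p ^+ 2
       - (x \in S)%:R / p - (y \in S)%:R / p + 1).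
  rewrite fE -sumrB expr2 mulr_suml; apply: eq_bigr => x _.
  rewrite [LHS]mulr_sumr [RHS]mulr_sumr; apply: eq_bigr => y _.
  by field.
rewrite (eq_bexp dE) bexp_sum.
have inner (x y : X) : bexp p (fun S => ((x \in S)%:R * (y \in S)%:R) / p ^+ 2
       - (x \in S)%:R / p - (y \in S)%:R / p + 1) = if y == x then 1 / p - 1 else 0.
  rewrite (eq_bexp (g:=fun S : {set X} => (1 / p ^+ 2) * ((x \in S)%:R * (y \in S)%:R)
     + (- 1 / p) * (x \in S)%:R + (- 1 / p) * (y \in S)%:R + 1)); last first.
    by move=> S; field.
  rewrite bexp_lin4 bexp1 bexp_in2 !bexp_in.
  by case: (y == x); field.
under eq_bigr => x _ do rewrite bexp_sum.
under eq_bigr => x _ do under eq_bigr => y _ do rewrite inner.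
have -> : \sum_x w x * \sum_y w y * (if y == x then 1 / p - 1 else 0) =
   (1 - p) / p * \sum_x w x ^+ 2.
  rewrite mulr_sumr; apply: eq_bigr => x _.
  rewrite (bigD1 x) //= eqxx big1 ?addr0; first by field.
  by move=> y /negbTE ->; rewrite mulr0.
apply: ler_wpM2l; last exact: sq_le.
apply: divr_ge0; [by rewrite subr_ge0 ltW | exact: ltW].
Qed.
End Gen.

Section Comb.
Variables (R : realFieldType) (U L E : finType)
          (src : E -> U) (dst : E -> L) (time : E -> R) (tau : R).

Lemma bt_first i e1 e2 e3 e4 : butterfly_tuple src dst time tau i e1 e2 e3 e4 ->
  [/\ time e1 < time e2, time e1 < time e3 & time e1 < time e4].
Proof.
case/and5P => _ _ _ _ /and4P[_ _ hs _]; move: hs.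
case: i => [[|[|[|[|[|[|n]]]]]] Hi];
  last by exfalso; move: Hi; rewrite !ltnS ltn0.
all: rewrite /sigma /= ?andbT;
  case/and3P => h1 h2 h3; split; lra.
Qed.

Lemma inst_unique i S : is_instance src dst time tau i S ->
  exists e1, forall e, (e \in S) && [forall f in S, time e <= time f] = (e == e1).
Proof.
case/existsP => e1 /existsP[e2 /existsP[e3 /existsP[e4 /andP[/eqP-> hb]]]].
have [l2 l3 l4] := bt_first hb.
exists e1 => e; apply/idP/eqP.
  move=> /andP[Hin /forall_inP Hm]; have He1 : e1 \in [set e1; e2; e3; e4] by rewrite !inE eqxx.
  have := Hm e1 He1.
  move: Hin; rewrite !inE -!orbA; case/or4P => /eqP -> //.
  - by rewrite leNgt l2.
  - by rewrite leNgt l3.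
  - by rewrite leNgt l4.
move=> ->; rewrite !inE eqxx /=; apply/forall_inP => f.
rewrite !inE -!orbA; case/or4P => /eqP ->; rewrite ?lexx // ltW //.
Qed.

Lemma sumCe i : (\sum_e count_Ce src dst time tau i e)%N = count_C src dst time tau i.
Proof.
rewrite /count_Ce /count_C.
under eq_bigr => e _ do rewrite -sum1_card big_mkcond /=.
rewrite exchange_big /= -sum1_card [RHS]big_mkcond /=.
apply: eq_bigr => S _; rewrite inE.
case: (boolP (is_instance src dst time tau i S)) => hS.
  have [e1 he1] := inst_unique hS.
  under eq_bigr => e _ do rewrite inE hS /= he1.
  by rewrite -big_mkcond big_pred1_eq.
by apply: big1 => e _; rewrite inE (negbTE hS).
Qed.
End Comb.

Lemma eq_bvar (R : realFieldType) (X : finType) (p : R) (f g : {set X} -> R) :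
  (forall S, f S = g S) -> bvar p f = bvar p g.
Proof.
move=> fg; rewrite /bvar (eq_bexp _ fg); apply: eq_bexp => S; by rewrite fg.
Qed.

Lemma node_red (R : realFieldType) (E Y : finType) (h : E -> Y) (c : E -> R) (p : R) :
  0 < p -> p < 1 -> (forall e, 0 <= c e) ->
  let f := fun S : {set Y} => (\sum_(e in [set e | h e \in S]) c e) / p in
  bexp p f = \sum_e c e /\ bvar p f <= (1 - p) / p * (\sum_e c e) ^+ 2.
Proof.
move=> p0 p1 c0 f.
pose W u := \sum_(e | h e == u) c e.
have fE S : f S = (\sum_(u in S) W u) / p.
  rewrite /f (partition_big h (mem S)) /=; last by move=> e; rewrite inE.
  congr (_ / _); apply: eq_bigr => u uS; apply: eq_bigl => e.
  by rewrite inE; case: eqP => [->|]; rewrite ?uS ?andbF.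
have sW : \sum_u W u = \sum_e c e.
  by rewrite [RHS](partition_big h predT).
rewrite (eq_bexp _ fE) (eq_bvar _ fE) -sW.
apply: gen => // u; exact: sumr_ge0.
Qed.

Theorem theorem4p1 (R : realFieldType) (U L E : finType)
    (src : E -> U) (dst : E -> L) (time : E -> R) (tau : R)
    (i : 'I_6) (p : R) :
  (forall e, 0 < time e) -> 0 < tau -> 0 < p -> p < 1 ->
  let C := (count_C src dst time tau i)%:R : R in
  (* TBC-E *)
  (bexp p (est_E src dst time tau i p) = C /\
   bvar p (est_E src dst time tau i p) <= (1 - p) / p * C ^+ 2) /\
  (* TBC-N, node sample in U *)
  (bexp p (est_NU src dst time tau i p) = C /\
   bvar p (est_NU src dst time tau i p) <= (1 - p) / p * C ^+ 2) /\
  (* TBC-N, node sample in L *)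
  (bexp p (est_NL src dst time tau i p) = C /\
   bvar p (est_NL src dst time tau i p) <= (1 - p) / p * C ^+ 2).
Proof.
move=> _ _ p0 p1 C.
have c0 e : 0 <= (count_Ce src dst time tau i e)%:R :> R by apply: ler0n.
have sC : \sum_e (count_Ce src dst time tau i e)%:R = C :> R.
  by rewrite -natr_sum sumCe.
split; last split.
- have := gen (w := fun e => (count_Ce src dst time tau i e)%:R) p0 p1 c0.
  by rewrite sC.
- have := node_red src p0 p1 c0; by rewrite sC.
- have := node_red dst p0 p1 c0; by rewrite sC.
Qed.
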